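(* If $\Gamma\vdash^A M:\tau$ and $M\to M'$, then $\Gamma\vdash^A M':\tau$.
   Context: Calculus $\lambda^{\triangleright}$. Let $\mathcal{G}$ be a countably infinite set of transition variables $\alpha,\beta,\dots$. A transition (or stage) $A,B$ is a finite sequence of transition variables; $\varepsilon$ is the empty sequence and $AB$ is concatenation. Types: $\tau ::= b \mid \tau\to\tau \mid \triangleright_\alpha\tau \mid \forall\alpha.\tau$ ($b$ ranges over base types; $\alpha$ is bound in $\forall\alpha.\tau$). Terms: $M ::= x \mid M\,M \mid \lambda x{:}\tau.M \mid \blacktriangleright_\alpha M \mid \blacktriangleleft_\alpha M \mid \Lambda\alpha.M \mid M\,A$ (quotation, unquotation, transition abstraction, and instantiation by a transition $A$); $x$ is bound in $\lambda x{:}\tau.M$ and $\alpha$ in $\Lambda\alpha.M$; bound variables are tacitly renamed. For $A=\alpha_1\cdots\alpha_n$ write $\triangleright_A\tau=\triangleright_{\alpha_1}\cdots\triangleright_{\alpha_n}\tau$, $\blacktriangleright_A M=\blacktriangleright_{\alpha_1}\cdots\blacktriangleright_{\alpha_n}M$, and $\blacktriangleleft_A M=\blacktriangleleft_{\alpha_n}\cdots\blacktriangleleft_{\alpha_1}M$ (all three are the identity when $A=\varepsilon$). Capture-avoiding substitution $\tau[\alpha:=B]$, $M[\alpha:=B]$, $A[\alpha:=B]$ of a transition for a transition variable replaces $\alpha$ by $B$ in transitions and replaces $\triangleright_\alpha,\blacktriangleright_\alpha,\blacktriangleleft_\alpha$ by $\triangleright_B,\blacktriangleright_B,\blacktriangleleft_B$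 respectively. $M[x:=N]$ is capture-avoiding term substitution. $\mathrm{FTV}$ denotes free transition variables. A context $\Gamma$ is a finite set $\{x_1:\tau_1@A_1,\dots,x_n:\tau_n@A_n\}$ with distinct $x_i$; $\mathrm{FTV}(\Gamma)=\bigcup_i(\mathrm{FTV}(\tau_i)\cup\mathrm{FTV}(A_i))$. Typing judgments $\Gamma\vdash^A M:\tau$ are derived by: (Var) $x:\tau@A\in\Gamma \Rightarrow \Gamma\vdash^A x:\tau$; (Abs) $\Gamma,x:\tau@A\vdash^A M:\sigma \Rightarrow \Gamma\vdash^A\lambda x{:}\tau.M:\tau\to\sigma$; (App) $\Gamma\vdash^A M:\tau\to\sigma$ and $\Gamma\vdash^A N:\tau$ $\Rightarrow \Gamma\vdash^A M\,N:\sigma$; (Quote) $\Gamma\vdash^{A\alpha}M:\tau \Rightarrow \Gamma\vdash^A\blacktriangleright_\alpha M:\triangleright_\alpha\tau$; (Unquote) $\Gamma\vdash^A M:\triangleright_\alpha\tau \Rightarrow \Gamma\vdash^{A\alpha}\blacktriangleleft_\alpha M:\tau$; (Gen) $\Gamma\vdash^A M:\tau$ and $\alpha\notin\mathrm{FTV}(\Gamma)\cup\mathrm{FTV}(A)$ $\Rightarrow \Gamma\vdash^A\Lambda\alpha.M:\forall\alpha.\tau$; (Ins) $\Gamma\vdash^A M:\forall\alpha.\tau \Rightarrow \Gamma\vdash^A M\,B:\tau[\alpha:=B]$. Reduction $M\to N$ is the least relation closed under all term constructors (reduction may occur anywhere, including under binders and quotations) containing $(\lambda x{:}\tau.M)\,N\to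 M[x:=N]$, $\blacktriangleleft_\alpha\blacktriangleright_\alpha M\to M$, and $(\Lambda\alpha.M)\,A\to M[\alpha:=A]$. *)

(* Defs.v *)
(* Calculus lambda^triangleright, with de Bruijn indices for
   both term variables and transition variables. *)
From Stdlib Require Import List Arith.
Import ListNotations.

Definition tvar := nat.
Definition transition := list tvar.

Inductive ty : Type :=
| TBase  : nat -> ty
| TArr   : ty -> ty -> ty
| TLater : tvar -> ty -> ty
| TAll   : ty -> ty.

(* Terms: x | M M | \x:t.M | |>_a M (quote) | <|_a M (unquote)
          | /\a. M | M A.  Lam binds term index 0, TLam binds transition index 0. *)
Inductive tm : Type :=
| Var     : nat -> tm
| App     : tm -> tm -> tm
| Lam     : ty -> tm -> tm
| Quote   : tvar -> tm -> tm
| Unquote : tvar -> tm -> tm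
| TLam    : tm -> tm
| TApp    : tm -> transition -> tm.

Definition laters (A : transition) (t : ty) : ty := fold_right TLater t A.
Definition quotes (A : transition) (M : tm) : tm := fold_right Quote M A.
Definition unquotes (A : transition) (M : tm) : tm :=
  fold_left (fun acc a => Unquote a acc) A M.

Definition tsubst := nat -> transition.

Definition tsubst_up (s : tsubst) : tsubst :=
  fun k => match k with 0 => [0] | S k' => map S (s k') end.

Definition tr_subst (s : tsubst) (A : transition) : transition := flat_map s A.

Fixpoint ty_subst (s : tsubst) (t : ty) : ty :=
  match t with
  | TBase b => TBase b
  | TArr t1 t2 => TArr (ty_subst s t1) (ty_subst s t2)
  | TLater a t' => laters (s a) (ty_subst s t')
  | TAll t' => TAll (ty_subst (tsubst_up s) t')
  end.

Fixpoint tm_tsubst (s : tsubst) (M : tm) : tm :=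
  match M with
  | Var x => Var x
  | App M1 M2 => App (tm_tsubst s M1) (tm_tsubst s M2)
  | Lam t M' => Lam (ty_subst s t) (tm_tsubst s M')
  | Quote a M' => quotes (s a) (tm_tsubst s M')
  | Unquote a M' => unquotes (s a) (tm_tsubst s M')
  | TLam M' => TLam (tm_tsubst (tsubst_up s) M')
  | TApp M' A => TApp (tm_tsubst s M') (tr_subst s A)
  end.

Definition tshift : tsubst := fun k => [S k].
Definition tsubst1 (B : transition) : tsubst :=
  fun k => match k with 0 => B | S k' => [k'] end.

Definition up_ren (r : nat -> nat) : nat -> nat :=
  fun k => match k with 0 => 0 | S k' => S (r k') end.

Fixpoint tm_rename (r : nat -> nat) (M : tm) : tm :=
  match M with
  | Var x => Var (r x)
  | App M1 M2 => App (tm_rename r M1) (tm_rename r M2)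
  | Lam t M' => Lam t (tm_rename (up_ren r) M')
  | Quote a M' => Quote a (tm_rename r M')
  | Unquote a M' => Unquote a (tm_rename r M')
  | TLam M' => TLam (tm_rename r M')
  | TApp M' A => TApp (tm_rename r M') A
  end.

Definition up_tm (s : nat -> tm) : nat -> tm :=
  fun k => match k with 0 => Var 0 | S k' => tm_rename S (s k') end.

Fixpoint tm_subst (s : nat -> tm) (M : tm) : tm :=
  match M with
  | Var x => s x
  | App M1 M2 => App (tm_subst s M1) (tm_subst s M2)
  | Lam t M' => Lam t (tm_subst (up_tm s) M')
  | Quote a M' => Quote a (tm_subst s M')
  | Unquote a M' => Unquote a (tm_subst s M')
  | TLam M' => TLam (tm_subst (fun k => tm_tsubst tshift (s k)) M')
  | TApp M' A => TApp (tm_subst s M') A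
  end.

Definition tm_subst1 (N : tm) : nat -> tm :=
  fun k => match k with 0 => N | S k' => Var k' end.

(* Contexts: x_i : tau_i @ A_i, with x_i the i-th de Bruijn index. *)
Definition ctx := list (ty * transition).

Definition ctx_tshift (G : ctx) : ctx :=
  map (fun p => (ty_subst tshift (fst p), tr_subst tshift (snd p))) G.

Inductive typing : ctx -> transition -> tm -> ty -> Prop :=
| T_Var : forall G A x t,
    nth_error G x = Some (t, A) ->
    typing G A (Var x) t
| T_Abs : forall G A t s M,
    typing ((t, A) :: G) A M s ->
    typing G A (Lam t M) (TArr t s)
| T_App : forall G A M N t s,
    typing G A M (TArr t s) ->
    typing G A N t ->
    typing G A (App M N) s
| T_Quote : forall G A a M t,
    typing G (A ++ [a]) M t ->
    typing G A (Quote a M) (TLater a t)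
| T_Unquote : forall G A a M t,
    typing G A M (TLater a t) ->
    typing G (A ++ [a]) (Unquote a M) t
| T_Gen : forall G A M t,
    (* the generalized variable is fresh for G and A: index 0 after shifting *)
    typing (ctx_tshift G) (tr_subst tshift A) M t ->
    typing G A (TLam M) (TAll t)
| T_Ins : forall G A M t B,
    typing G A M (TAll t) ->
    typing G A (TApp M B) (ty_subst (tsubst1 B) t).

Inductive step : tm -> tm -> Prop :=
| S_Beta : forall t M N, step (App (Lam t M) N) (tm_subst (tm_subst1 N) M)
| S_QU : forall a M, step (Unquote a (Quote a M)) M
| S_TBeta : forall M A, step (TApp (TLam M) A) (tm_tsubst (tsubst1 A) M)
| S_App1 : forall M M' N, step M M' -> step (App M N) (App M' N)
| S_App2 : forall M N N', step N N' -> step (App M N) (App M N')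
| S_Lam : forall t M M', step M M' -> step (Lam t M) (Lam t M')
| S_Quote : forall a M M', step M M' -> step (Quote a M) (Quote a M')
| S_Unquote : forall a M M', step M M' -> step (Unquote a M) (Unquote a M')
| S_TLam : forall M M', step M M' -> step (TLam M) (TLam M')
| S_TApp : forall M M' A, step M M' -> step (TApp M A) (TApp M' A).

(* Main.v *)
Require Import Defs.
From Stdlib Require Import List.
Import ListNotations.

Definition ctx_map (s : tsubst) (G : ctx) : ctx :=
  map (fun p => (ty_subst s (fst p), tr_subst s (snd p))) G.

Definition comp (s1 s2 : tsubst) : tsubst := fun k => tr_subst s2 (s1 k).

Lemma laters_app : forall X Y t, laters (X ++ Y) t = laters X (laters Y t).
Proof. intros. unfold laters. apply fold_right_app. Qed.

Lemma ty_subst_laters : forall s C t,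
  ty_subst s (laters C t) = laters (tr_subst s C) (ty_subst s t).
Proof.
  intros s C t; induction C as [|c C IH]; simpl; auto.
  rewrite IH. unfold tr_subst. simpl. rewrite laters_app. reflexivity.
Qed.

Lemma up_ext : forall s s', (forall k, s k = s' k) -> forall k, tsubst_up s k = tsubst_up s' k.
Proof. intros s s' H [|k]; simpl; auto. rewrite H; auto. Qed.

Lemma ty_subst_ext : forall t s s', (forall k, s k = s' k) -> ty_subst s t = ty_subst s' t.
Proof.
  induction t; intros s s' H; simpl; auto.
  - rewrite (IHt1 s s'), (IHt2 s s'); auto.
  - rewrite H, (IHt s s'); auto.
  - rewrite (IHt (tsubst_up s) (tsubst_up s')); auto. apply up_ext; auto.
Qed.

Lemma tr_subst_comp : forall s1 s2 A, tr_subst s2 (tr_subst s1 A) = tr_subst (comp s1 s2) A.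
Proof.
  intros s1 s2 A; unfold tr_subst, comp; induction A; simpl; auto.
  rewrite flat_map_app. f_equal. auto.
Qed.

Lemma map_flat_map_S : forall (s : tsubst) l, map S (flat_map s l) = flat_map (fun j => map S (s j)) l.
Proof. intros s l; induction l; simpl; auto. rewrite map_app; f_equal; exact IHl. Qed.

Lemma up_comp : forall s1 s2 k, comp (tsubst_up s1) (tsubst_up s2) k = tsubst_up (comp s1 s2) k.
Proof.
  intros s1 s2 [|k]; unfold comp; simpl; auto.
  unfold tr_subst. rewrite map_flat_map_S.
  induction (s1 k); simpl; auto. rewrite IHt. reflexivity.
Qed.

Lemma ty_subst_comp : forall t s1 s2, ty_subst s2 (ty_subst s1 t) = ty_subst (comp s1 s2) t.
Proof.
  induction t; intros s1 s2; simpl; auto.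
  - rewrite IHt1, IHt2; auto.
  - rewrite ty_subst_laters, IHt. reflexivity.
  - rewrite IHt. f_equal. apply ty_subst_ext. apply up_comp.
Qed.

Lemma tr_subst_ext : forall A s s', (forall k, s k = s' k) -> tr_subst s A = tr_subst s' A.
Proof. intros A s s' H; induction A; unfold tr_subst in *; simpl; auto. rewrite H, IHA; auto. Qed.

Lemma tr_subst_app : forall s A B, tr_subst s (A ++ B) = tr_subst s A ++ tr_subst s B.
Proof. intros. apply flat_map_app. Qed.

Lemma typing_quotes : forall C G B M t, typing G (B ++ C) M t -> typing G B (quotes C M) (laters C t).
Proof.
  induction C as [|c C IH]; intros G B M t H; simpl.
  - rewrite app_nil_r in H; auto.
  - constructor. apply IH. rewrite <- app_assoc. auto.
Qed.

Lemma typing_unquotes : forall C G B M t, typing G B M (laters C t) -> typing G (B ++ C) (unquotes C M) t.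
Proof.
  induction C as [|c C IH]; intros G B M t H; simpl.
  - rewrite app_nil_r; auto.
  - replace (B ++ c :: C) with ((B ++ [c]) ++ C) by (rewrite <- app_assoc; auto).
    apply IH. simpl in H. constructor. auto.
Qed.

Lemma ctx_map_comp : forall s1 s2 G, ctx_map s2 (ctx_map s1 G) = ctx_map (comp s1 s2) G.
Proof.
  intros. unfold ctx_map. rewrite map_map. apply map_ext. intros [u C]; simpl.
  rewrite ty_subst_comp, tr_subst_comp; auto.
Qed.

Lemma ctx_map_ext : forall s s' G, (forall k, s k = s' k) -> ctx_map s G = ctx_map s' G.
Proof.
  intros. unfold ctx_map. apply map_ext. intros [u C]; simpl.
  rewrite (ty_subst_ext u s s'), (tr_subst_ext C s s'); auto.
Qed.

Lemma shift_up : forall s k, comp tshift (tsubst_up s) k = comp s tshift k.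
Proof.
  intros s k; unfold comp, tshift, tr_subst; simpl. rewrite app_nil_r.
  induction (s k); simpl; auto; f_equal; auto.
Qed.

Lemma inst_up : forall s B k, comp (tsubst_up s) (tsubst1 (tr_subst s B)) k = comp (tsubst1 B) s k.
Proof.
  intros s B [|k]; unfold comp, tr_subst; simpl.
  - rewrite !app_nil_r; auto.
  - rewrite app_nil_r. induction (s k); simpl; auto. rewrite IHt; auto.
Qed.

Lemma typing_tsubst : forall G A M t, typing G A M t ->
  forall sg, typing (ctx_map sg G) (tr_subst sg A) (tm_tsubst sg M) (ty_subst sg t).
Proof.
  induction 1; intros sg; simpl.
  - constructor. unfold ctx_map. rewrite nth_error_map, H. reflexivity.
  - constructor. apply (IHtyping sg).
  - eapply T_App; [apply (IHtyping1 sg) | apply (IHtyping2 sg)].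
  - apply typing_quotes. specialize (IHtyping sg). rewrite tr_subst_app in IHtyping.
    unfold tr_subst at 2 in IHtyping. simpl in IHtyping. rewrite app_nil_r in IHtyping. auto.
  - rewrite tr_subst_app. unfold tr_subst at 2. simpl. rewrite app_nil_r.
    apply typing_unquotes. specialize (IHtyping sg). simpl in IHtyping. auto.
  - constructor. specialize (IHtyping (tsubst_up sg)).
    unfold ctx_tshift in *. fold (ctx_map tshift G) in IHtyping.
    fold (ctx_map tshift (ctx_map sg G)).
    rewrite ctx_map_comp, tr_subst_comp in *.
    rewrite (ctx_map_ext _ _ G (shift_up sg)), (tr_subst_ext A _ _ (shift_up sg)) in IHtyping.
    auto.
  - rewrite ty_subst_comp. rewrite <- (ty_subst_ext t _ _ (inst_up sg B)).
    rewrite <- ty_subst_comp. econstructor. apply (IHtyping sg).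
Qed.

Lemma typing_rename : forall G B M t, typing G B M t ->
  forall G' r, (forall x p, nth_error G x = Some p -> nth_error G' (r x) = Some p) ->
  typing G' B (tm_rename r M) t.
Proof.
  induction 1; intros G' r Hr; simpl.
  - constructor; auto.
  - constructor. apply IHtyping. intros [|x] p Hx; simpl in *; auto.
  - econstructor; eauto.
  - constructor; auto.
  - constructor; auto.
  - constructor. apply IHtyping. intros x p Hx. unfold ctx_tshift in *.
    rewrite nth_error_map in *. destruct (nth_error G x) eqn:E; simpl in Hx; try discriminate.
    rewrite (Hr _ _ E). auto.
  - econstructor; eauto.
Qed.

Lemma typing_subst : forall G B M t, typing G B M t ->
  forall G' sg, (forall x u C, nth_error G x = Some (u, C) -> typing G' C (sg x) u) ->
  typing G' B (tm_subst sg M) t.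
Proof.
  induction 1; intros G' sg Hs; simpl.
  - eauto.
  - constructor. apply IHtyping. intros [|x] u C Hx; simpl in *.
    + inversion Hx; subst. constructor. reflexivity.
    + eapply typing_rename; eauto.
  - econstructor; eauto.
  - constructor; auto.
  - constructor; auto.
  - constructor. apply IHtyping. intros x u C Hx. unfold ctx_tshift in *.
    rewrite nth_error_map in Hx. destruct (nth_error G x) as [[u0 C0]|] eqn:E; simpl in Hx; try discriminate.
    inversion Hx; subst. apply (typing_tsubst _ _ _ _ (Hs _ _ _ E) tshift).
  - econstructor; eauto.
Qed.

Lemma ty_subst_id : forall t s, (forall k, s k = [k]) -> ty_subst s t = t.
Proof.
  induction t; intros s H; simpl; auto.
  - rewrite IHt1, IHt2; auto.
  - rewrite H, IHt; auto.
  - rewrite IHt; auto. intros [|k]; simpl; auto. rewrite H; auto.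
Qed.

Lemma tr_subst_id : forall A s, (forall k, s k = [k]) -> tr_subst s A = A.
Proof. induction A; intros s H; unfold tr_subst in *; simpl; auto. rewrite H, IHA; auto. Qed.

Lemma ctx_id : forall G s, (forall k, s k = [k]) -> ctx_map s G = G.
Proof.
  induction G as [|[u C] G IH]; intros s H; simpl; auto.
  rewrite ty_subst_id, tr_subst_id; auto. f_equal. apply IH; auto.
Qed.

Theorem mainTheorem2 (G : ctx) (A : transition) (M M' : tm) (t : ty) :
  typing G A M t -> step M M' -> typing G A M' t.
Proof.
  intros HT HS. revert G A t HT. induction HS; intros G0 A0 t0 HT.
  - inversion HT as [| |? ? ? ? t1 ? HL HN| | | |]; subst.
    inversion HL as [|? ? ? ? ? HB| | | | |]; subst.
    eapply typing_subst; eauto. intros [|x] u C Hx; simpl in *.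
    + inversion Hx; subst; auto.
    + constructor; auto.
  - inversion HT as [| | | |? A1 ? ? ? HQ| |]; subst.
    inversion HQ; subst. auto.
  - inversion HT as [| | | | | |? ? ? ? ? HL]; subst.
    inversion HL as [| | | | |? ? ? ? HB|]; subst.
    pose proof (typing_tsubst _ _ _ _ HB (tsubst1 A)) as H.
    unfold ctx_tshift in H. fold (ctx_map tshift G0) in H.
    rewrite ctx_map_comp, tr_subst_comp, ctx_id, tr_subst_id in H; auto;
      intros k; unfold comp, tr_subst; simpl; auto.
  - inversion HT; subst. econstructor; eauto.
  - inversion HT; subst. econstructor; eauto.
  - inversion HT; subst. constructor; auto.
  - inversion HT; subst. constructor; auto.
  - inversion HT; subst. constructor; auto.
  - inversion HT; subst. constructor; auto.
  - inversion HT; subst. econstructor; eauto.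
Qed.
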